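(* Let $\mathcal X$ be a normed space, $\mathcal Y=\{1,\dots,C\}$, and $\eta_c(\mathbf x)=p(y=c\mid\mathbf x)$ class-conditional probabilities, each $\lambda^{\eta}$-Lipschitz in $\mathbf x$. Let $\tilde{\mathbf x}_1,\dots,\tilde{\mathbf x}_b\in\mathcal X$ be fixed selected points and $l(\cdot,\cdot;A_{\mathbf s}):\mathcal X\times\mathcal Y\to[0,L]$ a loss such that $\mathbf x\mapsto l(\mathbf x,y;A_{\mathbf s})$ is $\lambda^l$-Lipschitz for each $y$ and $l(\tilde{\mathbf x}_k,y;A_{\mathbf s})=0$ for all $k$ and $y$. Then for every $\mathbf x\in\mathcal X$, $$\mathbb E_{y\sim p(\cdot\mid\mathbf x)}\big[l(\mathbf x,y;A_{\mathbf s})\big]\le\big(\lambda^l+\lambda^{\eta}LC\big)\,|\mathbf x-\pi(\mathbf x)|,$$ and consequently $$\mathbb E_{(\mathbf x,y)\sim p_{\mathcal Z}}\big[l(\mathbf x,y;A_{\mathbf s})\big]\le\big(\lambda^l+\lambda^{\eta}LC\big)\max_{k}\mathbb E_{\mathbf x\sim\mathbb N_{\mathbf s}(k)}\big[|\mathbf x-\tilde{\mathbf x}_k|\big].$$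
   Context: $\pi(\mathbf x)=\arg\min_{\tilde{\mathbf x}\in\{\tilde{\mathbf x}_1,\dots,\tilde{\mathbf x}_b\}}|\mathbf x-\tilde{\mathbf x}|$ (ties broken by a fixed rule). Coverage area $\mathbb N_{\mathbf s}(k)=\{\mathbf x:\pi(\mathbf x)=\tilde{\mathbf x}_k\}$; $\mathbf x\sim\mathbb N_{\mathbf s}(k)$ denotes the conditional distribution $p(\mathbf x\mid\pi(\mathbf x)=\tilde{\mathbf x}_k)$ of the marginal of $p_{\mathcal Z}$; the max is over $k$ with $p(\pi(\mathbf x)=\tilde{\mathbf x}_k)>0$. *)

(* Defs.v *)
From HB Require Import structures.
From mathcomp Require Import all_boot all_order all_algebra.
From mathcomp Require Import all_classical all_reals all_analysis.
Set Implicit Arguments. Unset Strict Implicit. Unset Printing Implicit Defensive.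
Import Order.TTheory GRing.Theory Num.Theory.
Import numFieldNormedType.Exports.
Local Open Scope classical_set_scope.
Local Open Scope ring_scope.

Definition lipschitz_with {R : realType} {X : normedModType R}
  (lam : R) (f : X -> R) : Prop :=
  forall x x' : X, `|f x - f x'| <= lam * `|x - x'|.

Definition nearest_map {R : realType} {X : normedModType R} {b : nat}
  (xt : 'I_b -> X) (pi : X -> 'I_b) : Prop :=
  forall (x : X) (k : 'I_b), `|x - xt (pi x)| <= `|x - xt k|.

(* Main.v *)
Require Import Defs.
From HB Require Import structures.
From mathcomp Require Import all_boot all_order all_algebra.
From mathcomp Require Import all_classical all_reals all_analysis.
Import Order.TTheory GRing.Theory Num.Theory.
Import numFieldNormedType.Exports.
Local Open Scope classical_set_scope.
Local Open Scope ring_scope.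

Lemma lip_cont (R : realType) (X : normedModType R) (lam : R) (f : X -> R) :
  lipschitz_with lam f -> continuous f.
Proof.
move=> hf x; apply/cvgrPdist_lt => e e0.
set m := Num.max lam 1.
have m0 : 0 < m by rewrite lt_max ltr01 orbT.
have := @cvgr_dist_lt _ _ _ (nbhs x) _ id x (@cvg_id _ (nbhs x)) (e / m) (divr_gt0 e0 m0).
move=> H; near=> y; have hy : `|x - y| < e / m by near: y; exact: H.
apply: (le_lt_trans (hf x y)).
apply: (le_lt_trans (y := m * `|x - y|)).
  by rewrite ler_wpM2r // le_max lexx.
by rewrite mulrC -ltr_pdivlMr.
Unshelve. all: by end_near.
Qed.

Lemma cont_meas (R : realType) (X : normedModType R) d (T : measurableType d)
  (xr : T -> X) (hxr : forall B : set X, open B -> measurable (xr @^-1` B))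
  (h : X -> R) : continuous h -> measurable_fun setT (fun w => h (xr w)).
Proof.
move=> /continuousP ch; apply: (measurability _ (measurable_realfun.RGenOpens.measurableE R)).
move=> _ [_ [a [b ->]] <-]; rewrite setTI.
exact: (hxr (h @^-1` `]a, b[) (ch _ (interval_open _ _))).
Qed.

Lemma msum (R : realType) d (T : measurableType d) (I : Type) (r : seq I)
  (D : set T) (f : I -> T -> R) :
  (forall i, measurable_fun D (f i)) ->
  measurable_fun D (fun w => \sum_(i <- r) f i w).
Proof.
move=> mf; elim: r => [|a r ih].
  under eq_fun do rewrite big_nil; exact: measurable_cst.
under eq_fun do rewrite big_cons.
exact: measurable_realfun.measurable_funD.
Qed.
Theorem mainTheorem3
  (R : realType) (X : normedModType R) (C b : nat)
  (eta : X -> 'I_C -> R) (lam_eta : R)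
  (heta0 : forall x c, 0 <= eta x c)
  (heta1 : forall x, \sum_(c < C) eta x c = 1)
  (heta_lip : forall c, lipschitz_with lam_eta (fun x => eta x c))
  (xt : 'I_b -> X) (pi : X -> 'I_b) (hpi : nearest_map xt pi)
  (l : X -> 'I_C -> R) (L lam_l : R)
  (hl_range : forall x c, 0 <= l x c <= L)
  (hl_lip : forall c, lipschitz_with lam_l (fun x => l x c))
  (hl_zero : forall k c, l (xt k) c = 0)
  (d : measure_display) (T : measurableType d) (P : probability T R)
  (xr : T -> X) (yr : T -> 'I_C)
  (hxr : forall B : set X, open B -> measurable (xr @^-1` B))
  (hyr : forall c, measurable (yr @^-1` [set c]))
  (hcell : forall k, measurable (xr @^-1` (pi @^-1` [set k])))
  (hcond : forall (B : set X) (c : 'I_C), measurable (xr @^-1` B) ->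
     P (xr @^-1` B `&` yr @^-1` [set c])
     = (\int[P]_(w in xr @^-1` B) (eta (xr w) c)%:E)%E) :
  (forall x : X,
     \sum_(c < C) eta x c * l x c
     <= (lam_l + lam_eta * L * C%:R) * `|x - xt (pi x)|)
  /\
  ((\int[P]_w (l (xr w) (yr w))%:E
   <= ((lam_l + lam_eta * L * C%:R)%:E *
       \big[Order.max/-oo]_(k < b | (0 < P (xr @^-1` (pi @^-1` [set k])))%E)
          ((\int[P]_(w in xr @^-1` (pi @^-1` [set k])) (`|xr w - xt k|)%:E)
           * ((fine (P (xr @^-1` (pi @^-1` [set k]))))^-1)%:E)))%E).
Proof.
set K := lam_l + lam_eta * L * C%:R.
have hpt : forall x c, l x c <= K * `|x - xt (pi x)|.
  move=> x c.
  have h1 : l x c <= lam_l * `|x - xt (pi x)|.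
    have := hl_lip c x (xt (pi x)); rewrite /= hl_zero subr0.
    by apply: le_trans; exact: ler_norm.
  apply: (le_trans h1); rewrite /K mulrDl lerDl.
  have [->|dpos] := eqVneq `|x - xt (pi x)| 0; first by rewrite mulr0.
  have dgt : 0 < `|x - xt (pi x)| by rewrite lt_neqAle eq_sym dpos normr_ge0.
  have hL : 0 <= L by case/andP: (hl_range x c) => h0 h1'; exact: le_trans h1'.
  have he : 0 <= lam_eta.
    have := heta_lip c x (xt (pi x)) => /(le_trans (normr_ge0 _)).
    by rewrite pmulr_lge0.
  by rewrite !mulr_ge0.
split.
  move=> x; apply: (le_trans (y := \sum_(c < C) eta x c * (K * `|x - xt (pi x)|))).
    by apply: ler_sum => c _; by rewrite ler_wpM2l.
  by rewrite -big_distrl /= heta1 mul1r.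

set cell := fun k => xr @^-1` (pi @^-1` [set k]).
have mdist : forall k, measurable_fun setT (fun w => `|xr w - xt k|).
  move=> k; apply: (@cont_meas _ _ _ _ xr hxr (fun x => `|x - xt k|)); apply: (@lip_cont _ _ 1) => x y.
  rewrite mul1r; apply: (le_trans (ler_dist_dist _ _)).
  by rewrite opprB addrA subrK.
have ml : forall c, measurable_fun setT (fun w => l (xr w) c).
  move=> c; apply: (@cont_meas _ _ _ _ xr hxr (fun x => l x c)).
  exact: (@lip_cont _ _ lam_l (fun x => l x c) (hl_lip c)).
have hlsum : forall w, l (xr w) (yr w) =
    \sum_(c < C) \1_(yr @^-1` [set c]) w * l (xr w) c.
  move=> w; rewrite (bigD1 (yr w)) //= big1 ?addr0.
    by rewrite indicE mem_set // mul1r.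
  move=> c hc; rewrite indicE memNset ?mul0r //.
  by move=> /= e; move: hc; rewrite e eqxx.
have mlhs : measurable_fun setT (fun w => l (xr w) (yr w)).
  rewrite (_ : (fun w => _) = (fun w => \sum_(c < C) \1_(yr @^-1` [set c]) w * l (xr w) c)).
    apply: msum => c; apply: measurable_realfun.measurable_funM => //.
  by apply/funext => w; rewrite hlsum.
have hg : forall w, \sum_(k < b) \1_(cell k) w * `|xr w - xt k| = `|xr w - xt (pi (xr w))|.
  move=> w; rewrite (bigD1 (pi (xr w))) //= big1 ?addr0.
    by rewrite indicE mem_set // mul1r.
  move=> k hk; rewrite indicE memNset ?mul0r //.
  by move=> /= e; move: hk; rewrite e eqxx.
have mcell_int : forall k, (\int[P]_(w in cell k) (`|xr w - xt k|)%:E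
    = \int[P]_w ((\1_(cell k) w * `|xr w - xt k|)%:E))%E.
  move=> k; rewrite integral_mkcond; apply: eq_integral => w _.
  by rewrite /patch indicE; case: ifP => _; rewrite ?mul1r ?mul0r.
have [K0|K0] := leP 0 K; last first.
  have hd0 : forall w, `|xr w - xt (pi (xr w))| = 0.
    move=> w; have h := hpt (xr w) (yr w).
    have h0 : 0 <= K * `|xr w - xt (pi (xr w))|.
      by case/andP: (hl_range (xr w) (yr w)) => h0 _; exact: le_trans h.
    apply/eqP; rewrite eq_le normr_ge0 andbT.
    by rewrite -(nmulr_rge0 _ K0).
  rewrite integral0_eq; last first.
    move=> w _; have : l (xr w) (yr w) = 0.
      apply/eqP; rewrite eq_le; have := hpt (xr w) (yr w); rewrite hd0 mulr0 => ->.
      by case/andP: (hl_range (xr w) (yr w)).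
    by move=> ->.
  apply: mule_le0; first by rewrite lee_fin ltW.
  apply: bigmax_le => [|k _]; first exact: leNye.
  rewrite integral0_eq ?mul0e // => w /= hw.
  by rewrite -hw hd0.
set M := (\big[Order.max/-oo]_(k < b | _) _)%E.
have hU : \big[setU/set0]_(k < b) cell k = setT.
  apply/seteqP; split => // w _.
  by rewrite (bigD1 (pi (xr w))) //=; left.
have htriv : trivIset setT cell.
  by move=> i j _ _ [w [/= hi hj]]; rewrite -hi -hj.
have hsum : (\sum_(k < b) P (cell k) = 1)%E.
  rewrite -measure_semi_additive_ord ?hU //; exact: probability_setT.
apply: (le_trans (y := \int[P]_w (K%:E * (\sum_(k < b) \1_(cell k) w * `|xr w - xt k|)%:E))%E).
  apply: ge0_le_integral => //.
  - by move=> w _; rewrite lee_fin; case/andP: (hl_range (xr w) (yr w)).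
  - exact/measurable_realfun.measurable_EFinP.
  - apply: measurable_funeM; apply/measurable_realfun.measurable_EFinP.
    apply: msum => k; apply: measurable_realfun.measurable_funM => //.
    exact: measurable_realfun.measurable_indic (hcell k).
  - by move=> w _; rewrite -EFinM lee_fin hg hpt.
rewrite ge0_integralZl_EFin //; first last.
- apply/measurable_realfun.measurable_EFinP.
  apply: msum => k; apply: measurable_realfun.measurable_funM => //.
  exact: measurable_realfun.measurable_indic (hcell k).
- move=> w _; rewrite lee_fin; apply: sumr_ge0 => k _.
  by rewrite mulr_ge0 // indicE.
apply: lee_wpmul2l; first by rewrite lee_fin.
rewrite (_ : (\int[P]_x _ = \int[P]_w (\sum_(k < b) ((\1_(cell k) w * `|xr w - xt k|)%:E)))%E); last by apply: eq_integral => w _; rewrite sumEFin.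
rewrite ge0_integral_sum //; first last.
  move=> k; apply/measurable_realfun.measurable_EFinP.
  apply: measurable_realfun.measurable_funM => //.
  exact: measurable_realfun.measurable_indic (hcell k).
apply: (le_trans (y := \sum_(k < b) (M * P (cell k))%E)); last first.
  by rewrite -ge0_sume_distrr ?hsum ?mule1 // => k _; exact: measure_ge0.
apply: lee_sum => k _; rewrite -mcell_int.
have [P0|Ppos] : P (cell k) = 0%E \/ (0 < P (cell k))%E.
  by have := measure_ge0 P (cell k); rewrite le_eqVlt => /orP[/eqP <-|->]; [left|right].
  rewrite P0 mule0 null_set_integral //; first exact: hcell.
  apply/measurable_realfun.measurable_EFinP; exact: measurable_funTS.
pose p := fine (P (cell k)).
have hfin : P (cell k) = p%:E.
  by rewrite /p fineK //; apply: fin_num_measure; exact: hcell.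
have p0 : 0 < p by rewrite -lte_fin -hfin.
have hT := @le_bigmax_cond _ _ _ -oo%E k (fun k => (0 < P (xr @^-1` (pi @^-1` [set k])))%E)
  (fun k => ((\int[P]_(w in xr @^-1` (pi @^-1` [set k])) (`|xr w - xt k|)%:E)
           * ((fine (P (xr @^-1` (pi @^-1` [set k]))))^-1)%:E)%E) Ppos.
rewrite hfin; apply: le_trans (lee_wpmul2r _ hT); last by rewrite lee_fin ltW.
by rewrite -/p -muleA -EFinM mulVf ?gt_eqF // mule1.
Qed.
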